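(* Let $k$ be a field, $H_4$ the Sweedler four-dimensional Hopf algebra, and $E_2\subset H_4$ the subalgebra generated by $h$ (the algebra of dual numbers), made an $H_4$-comodule algebra via the restriction of $\Delta$. Then $\mathcal{H}^0(H_4,E_2)=k^\times$ and $\mathcal{H}^1(H_4,E_2)$ has exactly two elements, the classes of $1\otimes 1$ and $1\otimes g$.
   Context: $H_4$ is the $k$-algebra generated by $g,h$ with $g^2=1$, $h^2=0$, $gh+hg=0$, with Hopf structure $\Delta(g)=g\otimes g$, $\Delta(h)=h\otimes g+1\otimes h$, $\varepsilon(g)=1$, $\varepsilon(h)=0$, $\sigma(g)=g$, $\sigma(gh)=gh$. Since $\Delta(E_2)\subseteq E_2\otimes H_4$, $E_2$ is an $H_4$-comodule algebra. General non-abelian Hopf cohomology of a Hopf algebra $H$ with coefficients in an $H$-comodule algebra $E$ (coaction $\Delta_E$ an algebra map): with $d^0(x)=\Delta_E(x)$, $d^1(x)=x\otimes1$ and $d^0(X)=(\Delta_E\otimes\mathrm{id})(X)$, $d^1(X)=(\mathrm{id}\otimes\Delta_H)(X)$, $d^2(X)=X\otimes1$: $\mathcal{H}^0(H,E)=\{x\in E^\times: d^0(x)=d^1(x)\}$; $\mathcal{Z}^1(H,E)=\{X\in(E\otimes H)^\times: d^2(X)d^0(X)=d^1(X)\}$; $E^\times$ acts on the right by $X\leftharpoonup x=d^1(x^{-1})Xd^0(x)$; $\mathcal{H}^1(H,E)$ is the orbit set. $D^\times$ denotes units of an algebra $D$. *)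

(* Defs.v *)
From HB Require Import structures.
From mathcomp Require Import all_boot all_order all_algebra.
Set Implicit Arguments. Unset Strict Implicit. Unset Printing Implicit Defensive.
Import GRing.Theory.
Local Open Scope ring_scope.

Section Sweedler.
Variable k : fieldType.

(* an element is its coordinate vector; c p q r = coefficient of basis
   vector r in the product (basis p) * (basis q). *)
Definition bmul (I : finType) (c : I -> I -> I -> k) (x y : {ffun I -> k})
  : {ffun I -> k} :=
  [ffun r => \sum_(p : I) \sum_(q : I) x p * y q * c p q r].

Definition bv (I : finType) (i : I) : {ffun I -> k} := [ffun j => (i == j)%:R].

Definition ctens (I J : finType) (c1 : I -> I -> I -> k) (c2 : J -> J -> J -> k)
  (p q r : I * J) : k := c1 p.1 q.1 r.1 * c2 p.2 q.2 r.2.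

Definition tens (I J : finType) (x : {ffun I -> k}) (y : {ffun J -> k})
  : {ffun I * J -> k} := [ffun p => x p.1 * y p.2].

Definition linext (I J : finType) (f : I -> {ffun J -> k}) (x : {ffun I -> k})
  : {ffun J -> k} := [ffun j => \sum_(i : I) x i * f i j].

Definition bunit (I : finType) (c : I -> I -> I -> k) (e x : {ffun I -> k}) :=
  exists y, bmul c x y = e /\ bmul c y x = e.

(* ---------- H_4: basis (i,j) |-> g^i h^j *)
Definition Hb := (bool * bool)%type.
(* g^i h^j * g^i' h^j' = (-1)^(j i') g^(i+i') h^(j+j'), zero if j = j' = 1 *)
Definition cH (p q r : Hb) : k :=
  if p.2 && q.2 then 0
  else if r == (xorb p.1 q.1, p.2 || q.2) then (if p.2 && q.1 then -1 else 1)
  else 0.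
Definition H4 := {ffun Hb -> k}.
Definition oneH : H4 := bv (false, false).
Definition gH : H4 := bv (true, false).
Definition hH : H4 := bv (false, true).

(* ---------- E_2 = k[h] subset H_4: basis j |-> h^j *)
Definition Eb := bool.
Definition cE (p q r : Eb) : k :=
  if p && q then 0 else if r == (p || q) then 1 else 0.
Definition E2 := {ffun Eb -> k}.
Definition oneE : E2 := bv false.

Definition cEH := ctens cE cH.
Definition cEHH := ctens cEH cH.
Definition EH := {ffun Eb * Hb -> k}.
Definition EHH := {ffun Eb * Hb * Hb -> k}.
Definition oneEH : EH := tens oneE oneH.

(* ---------- comultiplication of H_4 on the basis:
   D(1) = 1(x)1, D(g) = g(x)g, D(h) = h(x)g + 1(x)h, D(gh) = gh(x)1 + g(x)gh *)
Definition DeltaB (p : Hb) : {ffun Hb * Hb -> k} :=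
  match p with
  | (false, false) => tens (bv (false,false)) (bv (false,false))
  | (true, false) => tens (bv (true,false)) (bv (true,false))
  | (false, true) => [ffun r => tens (bv (false,true)) (bv (true,false)) r
                     + tens (bv (false,false)) (bv (false,true)) r]
  | (true, true) => [ffun r => tens (bv (true,true)) (bv (false,false)) r
                    + tens (bv (true,false)) (bv (true,true)) r]
  end.

(* coaction of E_2: restriction of Delta: 1 |-> 1(x)1, h |-> h(x)g + 1(x)h *)
Definition DeltaEB (p : Eb) : EH :=
  if p then [ffun r => tens (bv true) gH r + tens (bv false) hH r]
  else tens (bv false) oneH.
Definition DeltaE (x : E2) : EH := linext DeltaEB x.

Definition d0E (x : E2) : EH := DeltaE x.
Definition d1E (x : E2) : EH := tens x oneH.
(* (Delta_E (x) id) *)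
Definition d0EH (X : EH) : EHH :=
  linext (fun p : Eb * Hb => tens (DeltaEB p.1) (bv p.2)) X.
(* (id (x) Delta_H), reassociated to (E (x) H) (x) H *)
Definition d1EH (X : EH) : EHH :=
  linext (fun p : Eb * Hb =>
            [ffun r : Eb * Hb * Hb => bv p.1 r.1.1 * DeltaB p.2 (r.1.2, r.2)]) X.
Definition d2EH (X : EH) : EHH := tens X oneH.

Definition H0mem (x : E2) : Prop := bunit cE oneE x /\ d0E x = d1E x.

Definition Z1cocycle (X : EH) : Prop :=
  bunit cEH oneEH X /\ bmul cEHH (d2EH X) (d0EH X) = d1EH X.

Definition orbit_rel1 (X Y : EH) : Prop :=
  exists x xi : E2, bmul cE x xi = oneE /\ bmul cE xi x = oneE /\
    Y = bmul cEH (bmul cEH (d1E xi) X) (d0E x).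

End Sweedler.

(* Main.v *)
Require Import Defs.
From HB Require Import structures.
From mathcomp Require Import all_boot all_order all_algebra.
Import GRing.Theory.
Local Open Scope ring_scope.

Section S.
Variable k : fieldType.
Lemma sumB (F : bool -> k) : \sum_(b : bool) F b = F true + F false.
Proof. exact: big_bool. Qed.
Lemma sumP (I J : finType) (F : I * J -> k) :
  \sum_(p : I * J) F p = \sum_(i : I) \sum_(j : J) F (i, j).
Proof. rewrite pair_bigA; by apply: eq_bigr => -[]. Qed.
Lemma sumHb (F : bool * bool -> k) : \sum_(p : bool * bool) F p =
  F (true,true) + F (true,false) + (F (false,true) + F (false,false)).
Proof. by rewrite sumP !sumB. Qed.
Lemma sumEH (F : bool * (bool * bool) -> k) : \sum_(p : bool * (bool * bool)) F p =
  F (true,(true,true)) + F (true,(true,false)) + (F (true,(false,true)) + F (true,(false,false)))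
 + (F (false,(true,true)) + F (false,(true,false)) + (F (false,(false,true)) + F (false,(false,false)))).
Proof. by rewrite sumP !sumB !sumHb. Qed.

Ltac ex := rewrite ?sumEH ?sumHb ?sumB /=.
Ltac simp := rewrite ?mulr0 ?mul0r ?mulr1 ?mul1r ?addr0 ?add0r ?mulrN1 ?mulrN ?mulNr ?oppr0 ?subr0.

Definition slice (Y : EHH k) (s : Hb) : EH k := [ffun q => Y (q, s)].

Lemma d2mul (X : EH k) (Y : EHH k) r s :
  bmul (cEHH k) (d2EH X) Y (r, s) = bmul (cEH k) X (slice Y s) r.
Proof.
rewrite /bmul !ffunE sumP; apply: eq_bigr => p _.
rewrite (bigD1 (false,false)) //= [X in _ + X]big1 ?addr0; last first.
  move=> p2 hp2; rewrite big1 // => q _.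
  by rewrite /d2EH /tens /oneH /bv !ffunE /= eq_sym (negbTE hp2) mulr0 !mul0r.
rewrite sumP; apply: eq_bigr => q _.
rewrite (bigD1 s) //= [X in _ + X]big1 ?addr0; last first.
  move=> q2 hq2.
  rewrite /cEHH /ctens /= /cH /=.
  by case: s hq2 => -[] [] ; case: q2 => -[] [] //= _; rewrite ?mulr0.
rewrite /d2EH /tens /oneH /bv /slice !ffunE /= mulr1 /cEHH /ctens /= /cH /=.
by case: s => -[] [] /=; rewrite mulr1.
Qed.

Lemma m_tTT (X Y : EH k) : bmul (cEH k) X Y (true,(true,true)) =
  X (true, (true, true)) * Y (false, (false, false)) + X (true, (true, false)) * Y (false, (false, true)) + (- (X (true, (false, true)) * Y (false, (true, false))) + X (true, (false, false)) * Y (false, (true, true))) + (X (false, (true, true)) * Y (true, (false, false)) + X (false, (true, false)) * Y (true, (false, true)) + (- (X (false, (false, true)) * Y (true, (true, false))) + X (false, (false, false)) * Y (true, (true, true)))).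
Proof. rewrite /bmul ffunE; ex; rewrite /cEH /ctens /cE /cH /=; simp; simp; done. Qed.
Lemma m_tTF (X Y : EH k) : bmul (cEH k) X Y (true,(true,false)) =
  X (true, (true, false)) * Y (false, (false, false)) + X (true, (false, false)) * Y (false, (true, false)) + (X (false, (true, false)) * Y (true, (false, false)) + X (false, (false, false)) * Y (true, (true, false))).
Proof. rewrite /bmul ffunE; ex; rewrite /cEH /ctens /cE /cH /=; simp; simp; done. Qed.
Lemma m_tFT (X Y : EH k) : bmul (cEH k) X Y (true,(false,true)) =
  - (X (true, (true, true)) * Y (false, (true, false))) + X (true, (true, false)) * Y (false, (true, true)) + (X (true, (false, true)) * Y (false, (false, false)) + X (true, (false, false)) * Y (false, (false, true))) + (- (X (false, (true, true)) * Y (true, (true, false))) + X (false, (true, false)) * Y (true, (true, true)) + (X (false, (false, true)) * Y (true, (false, false)) + X (false, (false, false)) * Y (true, (false, true)))).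
Proof. rewrite /bmul ffunE; ex; rewrite /cEH /ctens /cE /cH /=; simp; simp; done. Qed.
Lemma m_tFF (X Y : EH k) : bmul (cEH k) X Y (true,(false,false)) =
  X (true, (true, false)) * Y (false, (true, false)) + X (true, (false, false)) * Y (false, (false, false)) + (X (false, (true, false)) * Y (true, (true, false)) + X (false, (false, false)) * Y (true, (false, false))).
Proof. rewrite /bmul ffunE; ex; rewrite /cEH /ctens /cE /cH /=; simp; simp; done. Qed.
Lemma m_fTT (X Y : EH k) : bmul (cEH k) X Y (false,(true,true)) =
  X (false, (true, true)) * Y (false, (false, false)) + X (false, (true, false)) * Y (false, (false, true)) + (- (X (false, (false, true)) * Y (false, (true, false))) + X (false, (false, false)) * Y (false, (true, true))).
Proof. rewrite /bmul ffunE; ex; rewrite /cEH /ctens /cE /cH /=; simp; simp; done. Qed.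
Lemma m_fTF (X Y : EH k) : bmul (cEH k) X Y (false,(true,false)) =
  X (false, (true, false)) * Y (false, (false, false)) + X (false, (false, false)) * Y (false, (true, false)).
Proof. rewrite /bmul ffunE; ex; rewrite /cEH /ctens /cE /cH /=; simp; simp; done. Qed.
Lemma m_fFT (X Y : EH k) : bmul (cEH k) X Y (false,(false,true)) =
  - (X (false, (true, true)) * Y (false, (true, false))) + X (false, (true, false)) * Y (false, (true, true)) + (X (false, (false, true)) * Y (false, (false, false)) + X (false, (false, false)) * Y (false, (false, true))).
Proof. rewrite /bmul ffunE; ex; rewrite /cEH /ctens /cE /cH /=; simp; simp; done. Qed.
Lemma m_fFF (X Y : EH k) : bmul (cEH k) X Y (false,(false,false)) =
  X (false, (true, false)) * Y (false, (true, false)) + X (false, (false, false)) * Y (false, (false, false)).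
Proof. rewrite /bmul ffunE; ex; rewrite /cEH /ctens /cE /cH /=; simp; simp; done. Qed.

Lemma sliceE (Y : EHH k) s q : slice Y s q = Y (q, s).
Proof. by rewrite ffunE. Qed.

Lemma sum_pick (I : finType) (F : I -> k) s : \sum_(i : I) F i * (i == s)%:R = F s.
Proof.
rewrite (bigD1 s) //= eqxx mulr1 big1 ?addr0 // => i hi.
by rewrite (negbTE hi) mulr0.
Qed.

Lemma d0EHc (X : EH k) q s : d0EH X (q, s) = X (true, s) * DeltaEB k true q + X (false, s) * DeltaEB k false q.
Proof.
rewrite /d0EH /linext ffunE sumP sumB.
rewrite (eq_bigr (fun j => X (true, j) * DeltaEB k true q * (j == s)%:R)); last first.
  by move=> j _; rewrite /tens /bv !ffunE /= mulrA.
rewrite sum_pick.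
rewrite (eq_bigr (fun j => X (false, j) * DeltaEB k false q * (j == s)%:R)); last first.
  by move=> j _; rewrite /tens /bv !ffunE /= mulrA.
by rewrite sum_pick.
Qed.

Lemma d1EHc (X : EH k) j p s : d1EH X ((j, p), s) = \sum_(i : Hb) X (j, i) * DeltaB k i (p, s).
Proof.
rewrite /d1EH /linext ffunE sumP sumB.
case: j.
  rewrite [X in X + _](eq_bigr (fun i => X (true,i) * DeltaB k i (p,s))); last first.
    by move=> i _; rewrite ffunE /bv ffunE /= mulr1n mul1r.
  rewrite [X in _ + X]big1 ?addr0 // => i _.
  by rewrite ffunE /bv ffunE /= mulr0n mul0r mulr0.
rewrite [X in _ + X](eq_bigr (fun i => X (false,i) * DeltaB k i (p,s))); last first.
  by move=> i _; rewrite ffunE /bv ffunE /= mulr1n mul1r.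
rewrite [X in X + _]big1 ?add0r // => i _.
by rewrite ffunE /bv ffunE /= mulr0n mul0r mulr0.
Qed.

Ltac mm := rewrite ?m_tTT ?m_tTF ?m_tFT ?m_tFF ?m_fTT ?m_fTF ?m_fFT ?m_fFF.
Ltac getE H r s := move: (H (r, s));
  rewrite /= d2mul; mm; rewrite !sliceE !d0EHc d1EHc sumHb
   /DeltaEB /DeltaB /tens /gH /hH /oneH /bv !ffunE /= ?mulr0n ?mulr1n; simp; simp; simp.

Lemma cocy_eqs (X : EH k) : bmul (cEHH k) (d2EH X) (d0EH X) = d1EH X ->
  let a0 := X (false,(false,false)) in let a1 := X (false,(true,false)) in
  let a2 := X (false,(false,true)) in let a3 := X (false,(true,true)) in
  let b0 := X (true,(false,false)) in let b1 := X (true,(true,false)) in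
  let b2 := X (true,(false,true)) in let b3 := X (true,(true,true)) in
  [/\ [/\ a0 * a0 = a0, a0 * a1 = 0, a0 * a3 = 0, a1 * a1 = a1 & a1 * a2 = 0],
      [/\ a2 * a0 + a0 * b0 = 0, a2 * a1 + a0 * b1 = a2, a2 * a2 + a0 * b2 = 0
       & a2 * a3 + a0 * b3 = 0] &
      [/\ a3 * a0 + a1 * b0 = a3, a3 * a1 + a1 * b1 = 0, a3 * a2 + a1 * b2 = 0
       & a3 * a3 + a1 * b3 = 0]].
Proof.
move/ffunP=> H /=.
split; [split|split|split].
- by getE H (false,(false,false)) (false,false).
- by getE H (false,(false,false)) (true,false).
- by getE H (false,(false,false)) (true,true).
- by getE H (false,(true,false)) (true,false).
- by getE H (false,(true,false)) (false,true).
- by getE H (false,(false,true)) (false,false).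
- by getE H (false,(false,true)) (true,false).
- by getE H (false,(false,true)) (false,true).
- by getE H (false,(false,true)) (true,true).
- by getE H (false,(true,true)) (false,false).
- by getE H (false,(true,true)) (true,false).
- by getE H (false,(true,true)) (false,true).
- by getE H (false,(true,true)) (true,true).
Qed.

Local Notation A0 X := (X (false,(false,false))).
Local Notation A1 X := (X (false,(true,false))).
Local Notation A2 X := (X (false,(false,true))).
Local Notation A3 X := (X (false,(true,true))).
Local Notation B0 X := (X (true,(false,false))).
Local Notation B1 X := (X (true,(true,false))).
Local Notation B2 X := (X (true,(false,true))).
Local Notation B3 X := (X (true,(true,true))).

Ltac fin := rewrite ?m_tTT ?m_tTF ?m_tFT ?m_tFF ?m_fTT ?m_fTF ?m_fFT ?m_fFF;
  rewrite ?m_tTT ?m_tTF ?m_tFT ?m_tFF ?m_fTT ?m_fTF ?m_fFT ?m_fFF;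
  rewrite /d1E /d0E /DeltaE /linext /DeltaEB /oneEH /tens /gH /hH /oneH /oneE /bv ?ffunE ?sumB /= ?ffunE /= ?mulr0n ?mulr1n;
  simp; simp; simp.


Lemma solve0 (x y : k) : x + y = 0 -> y = - x.
Proof. by move=> h; rewrite -[y]add0r -(addNr x) -addrA h addr0. Qed.

Lemma partA (x : E2 k) : H0mem x <-> exists c : k, c != 0 /\ x = [ffun i => c * oneE k i].
Proof.
split.
  move=> [[y [hy1 hy2]] hd].
  move: (congr1 (fun F : E2 k => F false) hy1).
  rewrite /bmul ?ffunE !sumB /cE /oneE /bv /= ?ffunE /= ?mulr0n ?mulr1n; simp; simp; simp => U.
  move: (congr1 (fun F : EH k => F (false,(false,true))) hd).
  fin => ht.
  exists (x false); split.
    apply/eqP => h0; move: U; rewrite h0 mul0r => /eqP; by rewrite eq_sym oner_eq0.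
  apply/ffunP => -[]; rewrite !ffunE /= ?mulr0n ?mulr1n; simp; by [].
move=> [c [hc ->]]; split.
  exists [ffun i => c^-1 * oneE k i]; split; apply/ffunP => -[];
  rewrite /bmul ?ffunE !sumB /cE /oneE /bv /= ?ffunE /= ?mulr0n ?mulr1n; simp; simp; simp.
  all: try by rewrite ?mulfV ?mulVf.
apply/ffunP => -[j [a b]]; case: j; case: a; case: b; fin; by [].
Qed.

Ltac cocyc := apply/ffunP => -[[[] [[] []]] [[] []]]; rewrite d2mul; mm;
  rewrite !sliceE !d0EHc d1EHc sumHb /DeltaEB /DeltaB /tens /gH /hH /oneH /oneE /bv !ffunE /= ?mulr0n ?mulr1n; simp; simp; simp; by [].
Ltac unitc := apply/ffunP => -[[] [[] []]]; fin.

Lemma partB1 : Z1cocycle (tens (oneE k) (oneH k)).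
Proof.
split; last by cocyc.
rewrite /bunit; exists (tens (oneE k) (oneH k)); split; unitc; by [].
Qed.

Lemma partB2 : Z1cocycle (tens (oneE k) (gH k)).
Proof.
split; last by cocyc.
rewrite /bunit; exists (tens (oneE k) (gH k)); split; unitc; by [].
Qed.

Lemma partC : ~ orbit_rel1 (tens (oneE k) (oneH k)) (tens (oneE k) (gH k)).
Proof.
move=> [x [xi [_ [_ E]]]].
move: (congr1 (fun F : EH k => F (false,(true,false))) E).
fin. by move/eqP; rewrite oner_eq0.
Qed.

Lemma partD (X : EH k) : Z1cocycle X ->
  orbit_rel1 (tens (oneE k) (oneH k)) X \/ orbit_rel1 (tens (oneE k) (gH k)) X.
Proof.
move=> [[Y [HY _]] Hc].
have := cocy_eqs X Hc => /= -[[e11 e1g e1gh egg egh] [eh1 ehg ehh ehgh] [eq1 eqg eqh eqq]].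
have U : A1 X * A1 Y + A0 X * A0 Y = 1.
  by move: (congr1 (fun F : EH k => F (false,(false,false))) HY); fin.
case: (eqVneq (A0 X) 0) => [h0|h0].
  right.
  move: U eq1 eqg eqh eqq; rewrite h0 !mul0r !mulr0 !addr0 => U eq1 eqg eqh eqq.
  have a1nz : A1 X != 0.
    by apply/eqP => h1; move: U; rewrite h1 mul0r => /eqP; rewrite eq_sym oner_eq0.
  have hA1 : A1 X = 1 by apply: (mulfI a1nz); rewrite egg mulr1.
  move: egh eq1 eqg eqh eqq; rewrite hA1 !mul1r !mulr1 => hA2 hB0 eqg eqh eqq.
  move: eqh hB0; rewrite hA2 mulr0 !add0r => hB2 hB0.
  have hB1 := solve0 _ _ eqg.
  have hB3 := solve0 _ _ eqq.
  exists [ffun b : bool => if b then A3 X else 1], [ffun b : bool => if b then - A3 X else 1].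
  split; [|split].
  - apply/ffunP => -[]; rewrite /bmul ?ffunE !sumB /cE /oneE /bv /= ?ffunE /= ?mulr0n ?mulr1n; simp; simp; simp.
    by rewrite subrr. by [].
  - apply/ffunP => -[]; rewrite /bmul ?ffunE !sumB /cE /oneE /bv /= ?ffunE /= ?mulr0n ?mulr1n; simp; simp; simp.
    by rewrite addrC subrr. by [].
  apply/ffunP => -[[] [[] []]]; fin; rewrite ?h0 ?hA1 ?hA2 ?hB0 ?hB1 ?hB2 ?hB3 //.
left.
have hA0 : A0 X = 1 by apply: (mulfI h0); rewrite e11 mulr1.
move: e1g e1gh eh1 ehg ehh ehgh; rewrite hA0 !mul1r !mulr1 => hA1 hA3 eh1 ehg ehh ehgh.
move: eh1 ehg ehgh; rewrite hA1 hA3 !mulr0 !add0r => eh1 hB1 hB3.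
have hB0 := solve0 _ _ eh1.
have hB2 := solve0 _ _ ehh.
exists [ffun b : bool => if b then A2 X else 1], [ffun b : bool => if b then - A2 X else 1].
split; [|split].
- apply/ffunP => -[]; rewrite /bmul ?ffunE !sumB /cE /oneE /bv /= ?ffunE /= ?mulr0n ?mulr1n; simp; simp; simp.
  by rewrite subrr. by [].
- apply/ffunP => -[]; rewrite /bmul ?ffunE !sumB /cE /oneE /bv /= ?ffunE /= ?mulr0n ?mulr1n; simp; simp; simp.
  by rewrite addrC subrr. by [].
apply/ffunP => -[[] [[] []]]; fin; rewrite ?hA0 ?hA1 ?hA3 ?hB0 ?hB1 ?hB2 ?hB3 //.
Qed.
End S.

Theorem proposition1p6 (k : fieldType) :
  (forall x : E2 k, H0mem x <-> exists c : k, c != 0 /\ x = [ffun i => c * oneE k i]) /\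
  Z1cocycle (tens (oneE k) (oneH k)) /\ Z1cocycle (tens (oneE k) (gH k)) /\
  ~ orbit_rel1 (tens (oneE k) (oneH k)) (tens (oneE k) (gH k)) /\
  (forall X : EH k, Z1cocycle X ->
     orbit_rel1 (tens (oneE k) (oneH k)) X \/ orbit_rel1 (tens (oneE k) (gH k)) X).
Proof.
split; first exact: partA.
split; first exact: partB1.
split; first exact: partB2.
split; first exact: partC.
exact: partD.
Qed.
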